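(* Let $D_1\supset D_2\supset D_3\supset\cdots$ be closed topological disks in $\mathbb{R}^2$ and let $\varepsilon>0$. Then there exists $N$ such that whenever $n\ge N$ and $U$ is a component of $D_n\setminus D_{n+1}$, $U$ is $\varepsilon$ thin.
   Context: A set $U\subset\mathbb{R}^2$ is $\varepsilon$ thin if for every $x\in U$ the open round disk $B(x,\varepsilon)$ meets $\mathbb{R}^2\setminus U$. *)

(* Defs.v *)
(* The plane R^2 is modelled as R * R (product
   topology = usual topology of R^2), for an arbitrary realType R. *)
From HB Require Import structures.
From mathcomp Require Import all_boot all_order all_algebra.
From mathcomp Require Import all_classical all_reals all_analysis.
Set Implicit Arguments. Unset Strict Implicit. Unset Printing Implicit Defensive.
Import Order.TTheory GRing.Theory Num.Theory.
Import numFieldNormedType.Exports.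
Local Open Scope classical_set_scope.
Local Open Scope ring_scope.

Definition sqdist2 {R : realType} (x y : R * R) : R :=
  (x.1 - y.1) ^+ 2 + (x.2 - y.2) ^+ 2.

Definition round_ball {R : realType} (x : R * R) (e : R) : set (R * R) :=
  [set y | sqdist2 x y < e ^+ 2].

Definition unit_closed_disk (R : realType) : set (R * R) :=
  [set y | y.1 ^+ 2 + y.2 ^+ 2 <= 1].

Arguments unit_closed_disk R : clear implicits.

Definition closed_top_disk {R : realType} (D : set (R * R)) : Prop :=
  exists (f g : R * R -> R * R),
    [/\ {within unit_closed_disk R, continuous f},
        {within D, continuous g},
        f @` unit_closed_disk R = D,
        (forall x, unit_closed_disk R x -> g (f x) = x) &
        (forall y, D y -> f (g y) = y)].

Definition thin {R : realType} (e : R) (U : set (R * R)) : Prop :=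
  forall x, U x -> round_ball x e `&` ~` U !=set0.

Definition component_of {R : realType} (A U : set (R * R)) : Prop :=
  exists2 x, A x & U = connected_component A x.

(* Main.v *)
Require Import Defs.
From HB Require Import structures.
From mathcomp Require Import all_boot all_order all_algebra.
From mathcomp Require Import all_classical all_reals all_analysis.
From mathcomp Require Import ring lra.
From Stdlib Require Classical_Prop.
Import Order.TTheory GRing.Theory Num.Theory.
Import numFieldNormedType.Exports.
Local Open Scope classical_set_scope.
Local Open Scope ring_scope.

Lemma disk_compact (R : realType) : compact (unit_closed_disk R).
Proof.
have cB : compact (`[(-1 : R), 1]%classic `*` `[(-1 : R), 1]%classic).
  by apply: compact_setX; apply: segment_compact.
apply: (subclosed_compact _ cB).
- have -> : unit_closed_disk R =
     (fun y : R * R => y.1 ^+ 2 + y.2 ^+ 2) @^-1` [set x | x <= 1] by [].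
  apply: preimage_closed; last exact: closed_le.
  move=> x _; apply: cvgD; rewrite ?expr2; apply: cvgM.
  - exact: (@cvg_fst _ _ (nbhs x.1) (nbhs x.2) _).
  - exact: (@cvg_fst _ _ (nbhs x.1) (nbhs x.2) _).
  - exact: (@cvg_snd _ _ (nbhs x.1) (nbhs x.2) _).
  - exact: (@cvg_snd _ _ (nbhs x.1) (nbhs x.2) _).
- move=> y; rewrite /unit_closed_disk /= => H; split => /=; rewrite in_itv /=;
  apply/andP; split; nra.
Qed.

Definition P2 (R : realType) := (R * R)%type.
HB.instance Definition _ (R : realType) := Topological.copy (P2 R) (R * R)%type.
HB.instance Definition _ (R : realType) := Pointed.copy (P2 R) (R * R)%type.

Lemma compact_cov (R : realType) (A : set (R * R)) :
  compact A -> cover_compact (A : set (P2 R)).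
Proof. by move=> cA; rewrite -compact_cover; exact: cA. Qed.

Lemma pig (T : eqType) (s : seq T) : forall (F : nat -> Prop) (B : T -> nat -> Prop),
  (forall N, exists2 n, (N <= n)%N & F n) ->
  (forall n, F n -> exists2 c, c \in s & B c n) ->
  exists c n m, [/\ (n < m)%N, B c n & B c m].
Proof.
elim: s => [|c s IH] F B Hinf Hcov.
  by have [n _ /Hcov [c]] := Hinf 0%N.
case: (pselect (forall N, exists2 n, (N <= n)%N & B c n /\ F n)) => Hc.
  have [n _ [Bn _]] := Hc 0%N.
  have [m nm [Bm _]] := Hc n.+1.
  by exists c, n, m.
have [N0 HN0] : exists N0, forall n, (N0 <= n)%N -> ~ (B c n /\ F n).
  apply: Classical_Prop.NNPP => H1; apply: Hc => N; apply: Classical_Prop.NNPP => H2; apply: H1.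
  by exists N => n Nn Bn; apply: H2; exists n.
apply: (IH (fun n => (N0 <= n)%N /\ F n) B).
  move=> N; have [n Nn Fn] := Hinf (maxn N N0).
  by exists n; [exact: leq_trans (leq_maxl _ _) Nn|
    split=> //; exact: leq_trans (leq_maxr _ _) Nn].
move=> n [N0n Fn]; have [c' c'in Bc'] := Hcov n Fn.
move: c'in; rewrite inE => /orP [/eqP Ec|c's]; last by exists c'.
by exfalso; apply: (HN0 n N0n); rewrite -Ec.
Qed.

Lemma ballR (R : realType) (a b d : R) : ball a d b -> `|a - b| < d.
Proof. by rewrite -ball_normE. Qed.

Theorem mainTheorem19 (R : realType) (D : nat -> set (R * R)) (e : R) :
  (forall n, closed_top_disk (D n)) ->
  (forall n, D n.+1 `<=` D n) ->
  0 < e ->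
  exists N : nat, forall n : nat, (N <= n)%N ->
    forall U : set (R * R), component_of (D n `\` D n.+1) U -> thin e U.
Proof.
move=> Hd Hmon he.
have monok : forall k n, D (n + k)%N `<=` D n.
  elim=> [|k IH] n; first by rewrite addn0.
  by rewrite addnS; apply: subset_trans (Hmon _) (IH n).
have mono : forall n m, (n <= m)%N -> D m `<=` D n.
  by move=> n m nm; rewrite -(subnKC nm); apply: monok.
pose W n x := D n x /\ (forall y, round_ball x e y -> ~ D n.+1 y).
case: (pselect (exists N : nat, forall n : nat, (N <= n)%N ->
    forall U : set (R * R), component_of (D n `\` D n.+1) U -> thin e U)) => //.
move=> Hno; exfalso.
have Hinf : forall N, exists2 n, (N <= n)%N & exists x, W n x.
  move=> N; apply: Classical_Prop.NNPP => H1; apply: Hno; exists N => n Nn U [x0 _ EU] x Ux.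
  apply: Classical_Prop.NNPP => H2; apply: H1; exists n => //; exists x.
  have sub : U `<=` D n `\` D n.+1 by rewrite EU; apply: connected_component_sub.
  split; first by have [] := sub x Ux.
  move=> y By Dy; apply: H2; exists y; split => // Uy.
  by have [] := sub y Uy.
have cD0 : compact (D 0%N).
  have [f [g [fc _ fim _ _]]] := Hd 0%N.
  by rewrite -fim; apply: continuous_compact fc (disk_compact R).
pose d := e / 3.
have dpos : 0 < d by rewrite divr_gt0.
have {}cD0 := compact_cov _ _ cD0.
have op : forall i, D 0%N i -> open ((fun c : R * R => (ball c d : set (P2 R))) i).
  by move=> i _; exact: ball_open.
have cv : D 0%N `<=` cover (D 0%N) (fun c : R * R => (ball c d : set (P2 R))).
  by move=> x Dx; exists x => //; exact: ballxx.
have [D' _ cov] := cD0 _ _ _ op cv.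
have hc : forall n, (exists x, W n x) ->
    exists2 c, c \in finmap.enum_fset D' & exists x, W n x /\ ball c d x.
  move=> n [x Wx].
  have Dx : D 0%N x by apply: (mono 0%N n) => //; exact: Wx.1.
  have [c cin bc] := cov x Dx.
  by exists c => //; exists x.
have [c [n [m [nm [x [Wx bx]] [x' [Wx' bx']]]]]] :=
  @pig _ (finmap.enum_fset D') (fun n => exists x, W n x)
      (fun c n => exists x, W n x /\ ball c d x) Hinf hc.
apply: (Wx.2 x'); last by apply: (mono n.+1 m nm); exact: Wx'.1.
move: bx bx' => [/ballR b1 /ballR b2] [/ballR b1' /ballR b2'].
rewrite /round_ball /sqdist2 /=.
have sq : forall a b : R, `|a| < d -> `|b| < d -> (b - a) ^+ 2 < 4 * d ^+ 2.
  move=> a b; rewrite !ltr_norml => /andP[? ?] /andP[? ?]; nra.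
have h1 := sq _ _ b1 b1'; have h2 := sq _ _ b2 b2'.
have E1 : (x.1 - x'.1) = (c.1 - x'.1) - (c.1 - x.1) by ring.
have E2 : (x.2 - x'.2) = (c.2 - x'.2) - (c.2 - x.2) by ring.
rewrite E1 E2.
have : 8 * d ^+ 2 < e ^+ 2 by rewrite /d; nra.
lra.
Qed.
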